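(* Let $f:X\to\mathcal G$ be convex and $x_0\in\operatorname{dom}f$. For $x\in X$, $t\in\mathbb R$ put $x_t=x_0+t(x-x_0)$ and $I(x)=\operatorname{cl}\operatorname{co}\bigcup_{t\in(0,1)}f(x_t)$. Then $x_0$ solves the scalarized Minty inequality (for all $x\in X$ with $f(x)\ne f(x_0)$ there exists $z^*\in C^-\setminus\{0\}$ with $\varphi_{f,z^*}(x)\neq-\infty$ and $\varphi'_{f,z^*}(x,x_0-x)<0$) if and only if for all $x\in\operatorname{dom} f$: $$f(x)\ne f(x_0)\ \Longrightarrow\ I(x)\supseteq f(x)\ \text{ and }\ I(x)\ne f(x).$$
   Context: $X$ real linear space, $Z$ real locally convex Hausdorff space with dual $Z^*$, $C\subseteq Z$ closed convex cone, $0\in C$, $C^-=\{z^*:z^*(c)\le0\ \forall c\in C\}$, $C^-\setminus\{0\}\neq\emptyset$. $\mathcal G=\{A\subseteq Z:A=\operatorname{cl}\operatorname{co}(A+C)\}$; $A\oplus B=\operatorname{cl}\{a+b\}$, $tA=\{ta\}$ ($t>0$). $f$ convex: $f(tx_1+(1-t)x_2)\supseteq tf(x_1)\oplus(1-t)f(x_2)$; $\operatorname{dom}f=\{x:f(x)\ne\emptyset\}$. On $\overline{\mathbb R}$: inf-addition $\dot+$ ($(-\infty)\dot+(+\infty)=+\infty$), $r\ominus s=\inf\{t\in\mathbb R:r\le s\dot+t\}$ ($\inf\emptyset=+\infty$). $\varphi_{f,z^*}(x)=\inf\{-z^*(z):z\in f(x)\}$ ($+\infty$ if $f(x)=\emptyset$),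 $\varphi'_{f,z^*}(x,u)=\inf_{t>0}\frac1t(\varphi_{f,z^*}(x+tu)\ominus\varphi_{f,z^*}(x))$. *)

(* Defs.v *)
From HB Require Import structures.
From mathcomp Require Import all_boot all_order all_algebra.
From mathcomp Require Import all_classical all_reals all_analysis.
Set Implicit Arguments. Unset Strict Implicit. Unset Printing Implicit Defensive.
Import Order.TTheory GRing.Theory Num.Theory.
Import numFieldNormedType.Exports.
Local Open Scope classical_set_scope.
Local Open Scope ring_scope.

Section defs.
Variable R : realType.

Definition msum (M : lmodType R) (A B : set M) : set M :=
  [set a + b | a in A & b in B].

Definition mscale (M : lmodType R) (t : R) (A : set M) : set M :=
  [set t *: a | a in A].

Definition conv_hull (M : lmodType R) (A : set M) : set M :=
  \bigcap_(B in [set B : set M | convex_set (B : set (convex_lmodType M)) /\ A `<=` B]) B.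

Definition oplus (Z : tvsType R) (A B : set Z) : set Z := closure (msum A B).

Definition closed_convex_cone (Z : tvsType R) (C : set Z) : Prop :=
  closed C /\ convex_set (C : set (convex_lmodType Z)) /\ C 0 /\
  (forall t c, 0 < t -> C c -> C (t *: c)).

Definition topdual (Z : tvsType R) (zs : Z -> R) : Prop :=
  linear (zs : Z -> R^o) /\ continuous zs.

Definition negdual (Z : tvsType R) (C : set Z) (zs : Z -> R) : Prop :=
  topdual zs /\ forall c, C c -> zs c <= 0.

Definition imG (Z : tvsType R) (C : set Z) (A : set Z) : Prop :=
  A = closure (conv_hull (msum A C)).

Definition sv_convex (X : lmodType R) (Z : tvsType R) (f : X -> set Z) : Prop :=
  forall x1 x2 (t : R), 0 < t < 1 ->
    oplus (mscale t (f x1)) (mscale (1 - t) (f x2)) `<=` f (t *: x1 + (1 - t) *: x2).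

Definition dom (X : lmodType R) (Z : tvsType R) (f : X -> set Z) : set X :=
  [set x | f x !=set0].

Definition Iset (X : lmodType R) (Z : tvsType R) (f : X -> set Z) (x0 x : X) : set Z :=
  closure (conv_hull (\bigcup_(t in [set t : R | (0 < t < 1)%R]) f (x0 + t *: (x - x0)))).

Local Open Scope ereal_scope.

(* r ⊖ s = inf { t in R : r <= s ∔ t }  (s ∔ t%:E needs no convention, t finite) *)
Definition ominus (r s : \bar R) : \bar R :=
  ereal_inf [set t%:E | t in [set t : R | r <= s + t%:E]].

(* φ_{f,z*}(x) = inf { -z*(z) : z in f x }, = +oo if f x is empty *)
Definition phi (X : lmodType R) (Z : tvsType R) (f : X -> set Z) (zs : Z -> R)
  (x : X) : \bar R := ereal_inf [set (- zs z)%:E | z in f x].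

Definition dphi (X : lmodType R) (Z : tvsType R) (f : X -> set Z) (zs : Z -> R)
  (x u : X) : \bar R :=
  ereal_inf [set (t^-1)%:E * ominus (phi f zs (x + t *: u)) (phi f zs x)
            | t in [set t : R | (0 < t)%R]].

End defs.

(* Main.v *)
Require Import Defs.
From HB Require Import structures.
From mathcomp Require Import all_boot all_order all_algebra.
From mathcomp Require Import all_classical all_reals all_analysis.
From mathcomp Require Import ring lra.
Import Order.TTheory GRing.Theory Num.Theory.
Import numFieldNormedType.Exports.
Local Open Scope classical_set_scope.
Local Open Scope ring_scope.

Section HBsec.
Variables (R : realType) (V : lmodType R).

Definition subl (p : V -> R) :=
  (forall x y, p (x + y) <= p x + p y) /\ (forall t x, 0 < t -> p (t *: x) = t * p x).

Lemma subl0 p : subl p -> p 0 = 0.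
Proof.
move=> [_ hp]; have := hp 2 0 (ltr0Sn _ _); rewrite scaler0 => h; lra.
Qed.

Lemma sublZ p t x : subl p -> 0 <= t -> p (t *: x) = t * p x.
Proof.
move=> hp; rewrite le_eqVlt => /orP[/eqP <-|t0]; last by apply: hp.2.
by rewrite scale0r mul0r subl0.
Qed.

Lemma sublN p x : subl p -> - p (- x) <= p x.
Proof.
move=> hp; have := hp.1 x (- x); rewrite subrr subl0 //; lra.
Qed.

Definition shft (p : V -> R) (y x : V) :=
  inf [set p (x + t *: y) - t * p y | t in [set t : R | 0 <= t]].

Lemma shft_lb p y x : subl p -> lbound [set p (x + t *: y) - t * p y | t in [set t : R | 0 <= t]] (- p (- x)).
Proof.
move=> hp _ [t t0 <-]; rewrite -(sublZ _ t y hp t0).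
have := hp.1 (x + t *: y) (- x); rewrite addrC addKr; lra.
Qed.

Lemma shft_ne (p : V -> R) (y x : V) : [set p (x + t *: y) - t * p y | t in [set t : R | 0 <= t]] !=set0.
Proof. exists (p (x + 0 *: y) - 0 * p y); exists 0 => //=. Qed.

Lemma shft_le p y x t : subl p -> 0 <= t -> shft p y x <= p (x + t *: y) - t * p y.
Proof.
move=> hp t0; apply: ge_inf; first by exists (- p (- x)); exact: (shft_lb p y x hp).
by exists t.
Qed.

Lemma shft_ge (p : V -> R) (y x : V) c : (forall t, 0 <= t -> c <= p (x + t *: y) - t * p y) -> c <= shft p y x.
Proof. by move=> h; apply: lb_le_inf; [exact: (shft_ne p y x)|move=> _ [t t0 <-]; exact: h]. Qed.

Lemma shft_lep p y x : subl p -> shft p y x <= p x.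
Proof. by move=> hp; have := shft_le p y x 0 hp (lexx 0); rewrite scale0r addr0 mul0r subr0. Qed.

Lemma shft_N p y : subl p -> shft p y (- y) <= - p y.
Proof. by move=> hp; have := shft_le p y (- y) 1 hp ler01; rewrite scale1r addNr subl0 // mul1r sub0r. Qed.

Lemma shft_subl p y : subl p -> subl (shft p y).
Proof.
move=> hp; split.
- move=> x1 x2.
  suff h : forall t1, 0 <= t1 -> shft p y (x1 + x2) - (p (x1 + t1 *: y) - t1 * p y) <= shft p y x2.
    have : shft p y (x1 + x2) - shft p y x2 <= shft p y x1.
      by apply: shft_ge => t t0; have := h t t0; lra.
    lra.
  move=> t1 t10; apply: shft_ge => t2 t20.
  have := shft_le p y (x1 + x2) (t1 + t2) hp (addr_ge0 t10 t20).
  have := hp.1 (x1 + t1 *: y) (x2 + t2 *: y).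
  rewrite (_ : x1 + t1 *: y + (x2 + t2 *: y) = x1 + x2 + (t1 + t2) *: y); last first.
    by rewrite scalerDl addrACA.
  rewrite mulrDl; lra.
- move=> s x s0; apply/eqP; rewrite eq_le; apply/andP; split.
  + rewrite -ler_pdivrMl //; apply: shft_ge => t t0.
    rewrite ler_pdivrMl //.
    have := shft_le p y (s *: x) (s * t) hp (mulr_ge0 (ltW s0) t0).
    rewrite -scalerA -scalerDr (sublZ _ s _ hp (ltW s0)).
    by rewrite mulrBr mulrA.
  + apply: (shft_ge p y (s *: x)) => t t0.
    rewrite -ler_pdivlMl //.
    have := shft_le p y x (t / s) hp (divr_ge0 t0 (ltW s0)).
    have e : s *: x + t *: y = s *: (x + (t / s) *: y).
      by rewrite scalerDr scalerA mulrCA mulfV ?(lt0r_neq0 s0) // mulr1.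
    rewrite e (sublZ _ s _ hp (ltW s0)).
    have -> : s^-1 * (s * p (x + (t / s) *: y) - t * p y) = p (x + (t / s) *: y) - t / s * p y.
      by field; rewrite lt0r_neq0.
    by [].
Qed.


Lemma min_linear (q : V -> R) : subl q ->
  (forall r, subl r -> (forall x, r x <= q x) -> forall x, q x <= r x) ->
  (forall y, q (- y) = - q y) /\ (forall x y, q (x + y) = q x + q y) /\
  (forall a x, q (a *: x) = a * q x).
Proof.
move=> hq hmin.
have qN y : q (- y) = - q y.
  have h1 := hmin _ (shft_subl q y hq) (fun x => shft_lep q y x hq) (- y).
  have h2 := shft_N q y hq. have h3 := sublN q y hq. lra.
have qD x y : q (x + y) = q x + q y.
  have h1 := hq.1 x y. have h2 := hq.1 (x + y) (- y).
  rewrite addrK qN in h2; lra.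
split => //; split => // a x.
have [a0|a0] := leP 0 a; first exact: sublZ.
rewrite -(opprK a) scaleNr qN (sublZ _ (- a) x hq) ?mulNr ?opprK //.
by rewrite oppr_ge0 ltW.
Qed.

Lemma zorn_min (p0 : V -> R) : subl p0 ->
  exists q, subl q /\ (forall x, q x <= p0 x) /\
  (forall r, subl r -> (forall x, r x <= q x) -> forall x, q x <= r x).
Proof.
move=> hp0.
pose T := {q : V -> R | subl q /\ (forall x, q x <= p0 x)}.
pose t0 : T := exist _ p0 (conj hp0 (fun x => lexx _)).
pose Rl := fun a b : T => `[< forall x, sval b x <= sval a x >].
have := @ZL_preorder T t0 Rl.
case.
- by move=> a; apply/asboolP => x.
- move=> a b c /asboolP hab /asboolP hbc; apply/asboolP => x; exact: le_trans (hbc x) (hab x).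
- move=> A Atot.
  case: (pselect (A !=set0)) => [[a0 Aa0]|hA]; last first.
    by exists t0 => s As; exfalso; apply: hA; exists s.
  pose g x := inf [set sval a x | a in A].
  have gne x : [set sval a x | a in A] !=set0 by exists (sval a0 x); exists a0.
  have glb x : lbound [set sval a x | a in A] (- p0 (- x)).
    move=> _ [a Aa <-]; have := sublN (sval a) x (proj1 (svalP a)).
    have := proj2 (svalP a) (-x); lra.
  have gle x a : A a -> g x <= sval a x.
    move=> Aa; apply: ge_inf; [by exists (- p0 (- x)); exact: glb| by exists a].
  have gge x c : (forall a, A a -> c <= sval a x) -> c <= g x.
    move=> h; apply: lb_le_inf => // _ [a Aa <-]; exact: h.
  have hg : subl g.
    split.
    - move=> x y.
      have h1 : forall a, A a -> g (x + y) - sval a x <= g y.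
        move=> a Aa; apply: gge => b Ab.
        have [/asboolP hab|/asboolP hba] := Atot a b Aa Ab.
        + have := gle (x+y) b Ab; have := proj1 (proj1 (svalP b)) x y; have := hab x; lra.
        + have := gle (x+y) a Aa; have := proj1 (proj1 (svalP a)) x y; have := hba y; lra.
      have : g (x + y) - g y <= g x by apply: gge => a Aa; have := h1 a Aa; lra.
      lra.
    - move=> t x t0'.
      apply/eqP; rewrite eq_le; apply/andP; split.
      + rewrite -ler_pdivrMl //; apply: gge => a Aa.
        rewrite ler_pdivrMl //; have := gle (t *: x) a Aa.
        by rewrite (proj2 (proj1 (svalP a)) t x t0').
      + apply: gge => a Aa; rewrite (proj2 (proj1 (svalP a)) t x t0').
        by rewrite ler_pM2l //; apply: gle.
  have hgp : forall x, g x <= p0 x.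
    by move=> x; exact: le_trans (gle x a0 Aa0) (proj2 (svalP a0) x).
  exists (exist _ g (conj hg hgp)) => s As; apply/asboolP => x /=; exact: gle.
- move=> [q [hq hqp]] hmax; exists q; split => //; split => // r hr hrq x.
  have hrp : forall x, r x <= p0 x by move=> z; exact: le_trans (hrq z) (hqp z).
  have := hmax (exist _ r (conj hr hrp)).
  have : Rl (exist _ q (conj hq hqp)) (exist _ r (conj hr hrp)) by apply/asboolP.
  by move=> /[swap] /[apply] /asboolP; apply.
Qed.


Lemma hb_point (p : V -> R) (y : V) : subl p ->
  exists F : V -> R, (forall a u v, F (a *: u + v) = a * F u + F v) /\
    (forall x, F x <= p x) /\ p y <= F y.
Proof.
move=> hp.
have [q [hq [hqp hmin]]] := zorn_min _ (shft_subl p y hp).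
have [qN [qD qZ]] := min_linear _ hq hmin.
exists q; split; first by move=> a u v; rewrite qD qZ.
split; first by move=> x; exact: le_trans (hqp x) (shft_lep p y x hp).
have := hqp (- y); have := shft_N p y hp; rewrite qN; lra.
Qed.

End HBsec.
Arguments subl {R V}.
Arguments hb_point {R V}.
Section Sep.
Variables (R : realType) (Z : tvsType R).

Lemma cont_lscale (x : Z) : continuous (fun l : R^o => l *: x).
Proof.
move=> l; apply: (@continuous_comp R^o (R^o * Z)%type Z (fun l => (l, x)) (fun z => z.1 *: z.2)); last exact: scale_continuous.
by apply: (@cvg_pair _ _ _ _ (nbhs l) (nbhs x)); [exact: cvg_id|exact: cvg_cst].
Qed.

Lemma cont_aff (s : R) (a : Z) : continuous (fun y : Z => s *: (y + a)).
Proof.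
move=> y.
apply: (@continuous_comp Z (R^o * Z)%type Z (fun y => (s, y + a)) (fun z => z.1 *: z.2)); last exact: scale_continuous.
apply: (@cvg_pair _ _ _ _ (nbhs (s : R^o)) (nbhs (y + a))); first exact: cvg_cst.
apply: (@continuous_comp Z (Z * Z)%type Z (fun y => (y, a)) (fun z => z.1 + z.2)); last exact: add_continuous.
by apply: (@cvg_pair _ _ _ _ (nbhs y) (nbhs a)); [exact: cvg_id|exact: cvg_cst].
Qed.


Definition cvx (M : lmodType R) (A : set M) :=
  forall x y t, A x -> A y -> 0 <= t <= 1 -> A (t *: x + (1 - t) *: y).
Arguments cvx {M}.

Lemma cs_cvx (M : lmodType R) (A : set M) :
  convex_set (A : set (convex_lmodType M)) -> cvx A.
Proof.
move=> h x y t Ax Ay /andP[t0 t1]; have := h x y (Itv01 t0 t1).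
by rewrite !inE => /(_ Ax Ay).
Qed.

Lemma cvx_cs (M : lmodType R) (A : set M) :
  cvx A -> convex_set (A : set (convex_lmodType M)).
Proof.
move=> h x y l; rewrite !inE => Ax Ay; apply: h => //.
by apply/andP; split; [exact: ge0|exact: le1].
Qed.

Lemma convD (M : lmodType R) (t : R) (a b c d : M) :
  t *: (a + b) + (1 - t) *: (c + d) = (t *: a + (1 - t) *: c) + (t *: b + (1 - t) *: d).
Proof. by rewrite !scalerDr addrACA. Qed.

Lemma convxx (M : lmodType R) (t : R) (a : M) : t *: a + (1 - t) *: a = a.
Proof. by rewrite -scalerDl subrKC scale1r. Qed.

Lemma separation (K : set Z) (w : Z) : cvx K -> K !=set0 -> ~ closure K w ->
  exists F : Z -> R, (forall a u v, F (a *: u + v) = a * F u + F v) /\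
    continuous F /\ exists c, (forall k, K k -> F k <= c) /\ c < F w.
Proof.
move=> cK [a0 Ka0] hw.
have [B [nB KB]] : exists B, nbhs w B /\ (forall k, K k -> ~ B k).
  apply: contrapT => h; apply: hw => B nB; apply: contrapT => hn; apply: h.
  by exists B; split => // k Kk Bk; apply: hn; exists k.
have [Bs Bcvx [Bopen Bbas]] := @locally_convex R Z.
have [U [BsU Uw] UB] := Bbas w B nB.
have nU : nbhs w U by apply: open_nbhs_nbhs; split => //; exact: Bopen.
have cU : cvx U by apply: cs_cvx; apply: Bcvx; exact: mem_set.
pose W := [set y : Z | U (w - y)].
have nW : nbhs 0 W.
  have h := cont_aff (-1) (- w) 0.
  have : nbhs (-1 *: (0 - w)) U by rewrite sub0r scaleN1r opprK.
  move=> /h hU.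
  apply: (@filterS _ _ _ [set y | U (-1 *: (y - w))]); last exact: hU.
  by move=> y /=; rewrite scaleN1r opprB.
have W0 : W 0 by rewrite /W /= subr0.
have cW : cvx W.
  move=> y1 y2 t Wy1 Wy2 t01; rewrite /W /=.
  have -> : w - (t *: y1 + (1 - t) *: y2) = t *: (w - y1) + (1 - t) *: (w - y2).
    by rewrite convD convxx opprD !scalerN.
  exact: cU.
have WK y : W y -> ~ K (w - y) by move=> Wy Kwy; exact: KB _ Kwy (UB _ Wy).
have absW x : exists l, 0 < l /\ W (l *: x).
  have h := cont_lscale x 0.
  have : nbhs (0 *: x) W by rewrite scale0r.
  move=> /h /nbhs_ballP [e e0 he].
  exists (e / 2); split; first by rewrite divr_gt0 //; move: e0.
  move: e0 => /= e0. apply: he; rewrite /ball /= sub0r normrN ger0_norm; first lra. 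
  by rewrite divr_ge0 // ltW.
pose D := [set z : Z | exists k u, K k /\ W u /\ z = k - a0 + u].
have WD u : W u -> D u by move=> Wu; exists a0, u; rewrite subrr add0r.
have cD : cvx D.
  move=> _ _ t [k1 [u1 [K1 [W1 ->]]]] [k2 [u2 [K2 [W2 ->]]]] t01.
  exists (t *: k1 + (1 - t) *: k2), (t *: u1 + (1 - t) *: u2); split; first exact: cK.
  split; first exact: cW.
  by rewrite convD convD convxx.
have D0 : D 0 by apply: WD.
pose p x := inf [set l : R | 0 < l /\ D (l^-1 *: x)].
have pne x : [set l : R | 0 < l /\ D (l^-1 *: x)] !=set0.
  have [l [l0 Wl]] := absW x; exists l^-1; split; first by rewrite invr_gt0.
  by rewrite invrK; apply: WD.
have plb x : lbound [set l : R | 0 < l /\ D (l^-1 *: x)] 0.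
  by move=> l [l0 _]; exact: ltW.
have ple x l : 0 < l -> D (l^-1 *: x) -> p x <= l.
  by move=> l0 Dl; apply: ge_inf; [exists 0; exact: plb|].
have pge x c : (forall l, 0 < l -> D (l^-1 *: x) -> c <= l) -> c <= p x.
  by move=> h; apply: lb_le_inf => // l [l0 Dl]; exact: h.
have hp : subl p.
  split.
  - move=> x y.
    have h1 : forall l, 0 < l -> D (l^-1 *: x) -> p (x + y) - l <= p y.
      move=> l l0 Dl; apply: pge => m m0 Dm.
      suff : p (x + y) <= l + m by lra.
      apply: ple; first exact: addr_gt0.
      have lm0 : 0 < l + m by exact: addr_gt0.
      have -> : (l + m)^-1 *: (x + y) =
          (l / (l + m)) *: (l^-1 *: x) + (1 - l / (l + m)) *: (m^-1 *: y).
        rewrite !scalerA scalerDr; congr (_ + _); congr (_ *: _); field.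
        - by rewrite !lt0r_neq0.
        - by rewrite !lt0r_neq0.
      apply: cD => //; apply/andP; split; first by rewrite divr_ge0 // ltW.
      by rewrite ler_pdivrMr // mul1r lerDl ltW.
    have : p (x + y) - p y <= p x by apply: pge => l l0 Dl; have := h1 l l0 Dl; lra.
    lra.
  - move=> t x t0; apply/eqP; rewrite eq_le; apply/andP; split.
    + rewrite -ler_pdivrMl //; apply: pge => l l0 Dl.
      rewrite ler_pdivrMl //; apply: ple; first exact: mulr_gt0.
      by rewrite scalerA invfM mulrAC mulVf ?lt0r_neq0 // mul1r.
    + apply: pge => l l0 Dl.
      rewrite -ler_pdivlMl //; apply: ple; first by rewrite mulr_gt0 // invr_gt0.
      rewrite scalerA in Dl.
      by rewrite invfM invrK mulrC.
have p1 d : D d -> p d <= 1 by move=> Dd; apply: ple => //; rewrite invr1 scale1r.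
have pw : 1 <= p (w - a0).
  apply: pge => l l0 Dl; rewrite leNgt; apply/negP => l1.
  have : D (l *: (l^-1 *: (w - a0)) + (1 - l) *: 0).
    by apply: cD => //; apply/andP; split; [exact: ltW|exact: ltW].
  rewrite scaler0 addr0 scalerA mulfV ?lt0r_neq0 // scale1r.
  move=> [k [u [Kk [Wu e]]]]; apply: (WK u Wu).
  have -> : w - u = k; last by [].
  by apply: (addIr u); rewrite subrK; apply: (addIr (- a0)); rewrite e addrAC.
have [F [Flin [Fp Fw]]] := hb_point p (w - a0) hp.
have F0 : F 0 = 0 by have := Flin 1 0 0; rewrite scale1r addr0 mul1r; lra.
have FZ a u : F (a *: u) = a * F u by have := Flin a u 0; rewrite addr0 F0 addr0.
have FD u v : F (u + v) = F u + F v by have := Flin 1 u v; rewrite scale1r mul1r.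
have FB u v : F (u - v) = F u - F v by rewrite FD -[- v]scaleN1r FZ mulN1r.
have FW u : W u -> F u <= 1 by move=> Wu; exact: le_trans (Fp u) (p1 u (WD u Wu)).
exists F; split => //; split.
- move=> z; apply/cvgrPdist_le => e e0.
  have h1 := cont_aff e^-1 (- z) z.
  have h2 := cont_aff (- e^-1) (- z) z.
  have : nbhs (e^-1 *: (z - z)) W by rewrite subrr scaler0.
  move=> /h1 n1.
  have : nbhs (- e^-1 *: (z - z)) W by rewrite subrr scaler0.
  move=> /h2 n2.
  near=> y.
  have g1 : W (e^-1 *: (y - z)) by near: y.
  have g2 : W (- e^-1 *: (y - z)) by near: y.
  have := FW _ g1; have := FW _ g2; rewrite !FZ FB mulNr -mulrN.
  rewrite !ler_pdivrMl // !mulr1 ler_norml => q1 q2.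
  apply/andP; split; lra.
- have [m [m0 Wm]] := absW (w - a0).
  have Fw1 : 1 <= F w - F a0 by rewrite -FB; exact: le_trans pw Fw.
  have mF : m <= m * (F w - F a0) by rewrite ler_pMr.
  exists (F a0 + 1 - m); split; last by lra.
  move=> k Kk.
  have Dk : D (k - a0 + m *: (w - a0)) by exists k, (m *: (w - a0)).
  have := p1 _ Dk; have := Fp (k - a0 + m *: (w - a0)).
  rewrite FD FB FZ FB; lra.
Unshelve. all: by end_near.
Qed.

End Sep.

Arguments cvx {R M}.
Arguments cs_cvx {R M A}.
Arguments cvx_cs {R M A}.
Arguments separation {R Z K w}.

Set Implicit Arguments. Unset Strict Implicit.
Section Aux.
Variable R : realType.

Lemma ch_cvx (M : lmodType R) (A : set M) : cvx (conv_hull A).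
Proof.
move=> x y t hx hy t01 B [cB AB]; apply: (cs_cvx cB) => //; [exact: (hx B (conj cB AB))|exact: (hy B (conj cB AB))].
Qed.

Lemma ch_sub (M : lmodType R) (A : set M) : A `<=` conv_hull A.
Proof. by move=> x Ax B [_ AB]; exact: AB. Qed.

Lemma ch_min (M : lmodType R) (A B : set M) : cvx B -> A `<=` B -> conv_hull A `<=` B.
Proof. by move=> cB AB x; apply; split => //; exact: cvx_cs. Qed.

Lemma cl_min (T : topologicalType) (A B : set T) : closed B -> A `<=` B -> closure A `<=` B.
Proof. by move=> cB AB; rewrite (closure_id B).1 //; exact: closure_subset. Qed.


Lemma lin_props (M : lmodType R) (F : M -> R) :
  (forall a u v, F (a *: u + v) = a * F u + F v) ->
  [/\ F 0 = 0, (forall a u, F (a *: u) = a * F u) & (forall u v, F (u + v) = F u + F v)].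
Proof.
move=> Flin.
have F0 : F 0 = 0 by have := Flin 1 0 0; rewrite scale1r addr0 mul1r; lra.
split => //.
- by move=> a u; have := Flin a u 0; rewrite addr0 F0 addr0.
- by move=> u v; have := Flin 1 u v; rewrite scale1r mul1r.
Qed.

Lemma half_cvx (M : lmodType R) (F : M -> R) (c : R) :
  (forall a u v, F (a *: u + v) = a * F u + F v) -> cvx [set z | F z <= c].
Proof.
move=> /lin_props [F0 FZ FD] x y t /= hx hy /andP[t0 t1].
rewrite FD !FZ.
have h1 : t * F x <= t * c by rewrite ler_wpM2l.
have h2 : (1 - t) * F y <= (1 - t) * c by rewrite ler_wpM2l // subr_ge0.
lra.
Qed.

Lemma nf_conv (M : lmodType R) (a b c d : R) (x y : M) :
  a *: (b *: x + c *: y) + d *: x = (a * b + d) *: x + (a * c) *: y.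
Proof. by rewrite scalerDr !scalerA addrAC -scalerDl. Qed.

Lemma nf_seg (M : lmodType R) (s : R) (x x0 : M) :
  x0 + s *: (x - x0) = s *: x + (1 - s) *: x0.
Proof. by rewrite scalerBr scalerBl scale1r addrCA. Qed.

Lemma nf_seg2 (M : lmodType R) (t : R) (x x0 : M) :
  x + t *: (x0 - x) = (1 - t) *: x + t *: x0.
Proof. by rewrite nf_seg addrC; congr (_ + _); congr (_ *: _); ring. Qed.

End Aux.

Unset Implicit Arguments.
Set Strict Implicit.

Theorem mainTheorem14 (R : realType) (X : lmodType R) (Z : tvsType R)
  (C : set Z) (f : X -> set Z) (x0 : X) :
  hausdorff_space Z ->
  closed_convex_cone C ->
  (exists zs : Z -> R, negdual C zs /\ zs <> (fun _ => 0)) ->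
  (forall x, imG C (f x)) ->
  sv_convex f ->
  dom f x0 ->
  (forall x : X, f x <> f x0 ->
     exists zs : Z -> R, negdual C zs /\ zs <> (fun _ => 0) /\
       phi f zs x <> -oo%E /\ (dphi f zs x (x0 - x) < 0)%E)
  <->
  (forall x : X, dom f x -> f x <> f x0 ->
     f x `<=` Iset f x0 x /\ Iset f x0 x <> f x).
Proof.
move=> hZ [Ccl [Ccv [C0 Ccone]]] [zs0 [nd0 nz0]] himG hconv hx0.
have convpt x1 x2 t a b : 0 < t < 1 -> f x1 a -> f x2 b ->
    f (t *: x1 + (1 - t) *: x2) (t *: a + (1 - t) *: b).
  move=> t01 fa fb; apply: hconv => //; apply: subset_closure.
  exists (t *: a); first by exists a.
  by exists ((1 - t) *: b); first by exists b.
split; last first.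
- move=> hR x neq.
  case: (pselect (f x !=set0)) => [domx|ndom]; last first.
    exists zs0; split => //; split => //.
    have fx0 : f x = set0 by apply/seteqP; split => // z fz; apply: ndom; exists z.
    have phix : phi f zs0 x = +oo%E by rewrite /phi fx0 image_set0 ereal_inf0.
    split; first by rewrite phix.
    have om : forall r : \bar R, ominus r +oo%E = -oo%E.
      move=> r; apply: eq_ninfty => r'; apply: ereal_inf_lbound; exists r' => //=.
      by rewrite addye // leey.
    apply: (@le_lt_trans _ _ (-oo)%E) => //.
    have <- : ((1^-1)%:E * ominus (phi f zs0 (x + 1 *: (x0 - x))) (phi f zs0 x) = -oo)%E.
      by rewrite phix om invr1 mul1e.
    by apply: ereal_inf_lbound; exists 1; [exact: ltr01|].
  have [sub ne] := hR x domx neq.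
  have [w Iw nfw] : exists2 w, Iset f x0 x w & ~ f x w.
    apply: contrapT => h; apply: ne; apply/seteqP; split => // z Iz.
    by apply: contrapT => nz; apply: h; exists z.
  pose K := conv_hull (Defs.msum (f x) C).
  have fxK : f x = closure K := himG x.
  have [a fa] := domx.
  have Kne : K !=set0.
    have := fa; rewrite fxK => /(_ setT filterT) [k [Kk _]]; by exists k.
  have nKw : ~ closure K w by rewrite -fxK.
  have [F [Flin [Fcont [c [Fc cw]]]]] := separation (@ch_cvx R Z (Defs.msum (f x) C)) Kne nKw.
  have [F0 FZ FD] := lin_props Flin.
  have hcl : closed [set z | F z <= c].
    exact: ((continuous_closedP F).1 Fcont _ (@closed_le _ c)).
  have Fcl z : f x z -> F z <= c.
    by rewrite fxK => hz; exact: (cl_min hcl Fc hz).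
  have FC k : C k -> F k <= 0.
    move=> Ck; rewrite leNgt; apply/negP => Fk.
    have Fa := Fcl a fa.
    pose t := (c - F a + 1) / F k.
    have t0 : 0 < t by rewrite /t divr_gt0 //; lra.
    have : K (a + t *: k).
      apply: ch_sub; exists a => //; exists (t *: k) => //; exact: Ccone.
    move/Fc; rewrite FD FZ /t divfK ?lt0r_neq0 //; lra.
  have philb : ((- c)%:E <= phi f F x)%E.
    by apply/ereal_infP => _ [z fz <-]; rewrite lee_fin lerN2; exact: Fcl.
  exists F; split.
    split; [split|exact: FC]; last exact: Fcont.
    by move=> r u v; exact: Flin.
  split.
    move=> F0'; have h1 : 0 <= c by have := Fcl a fa; rewrite F0'.
    have h2 : c < 0 by have := cw; rewrite F0'.
    clear -h1 h2; lra.
  split.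
    by move=> E; move: philb; rewrite E.
  have [s s01 [z fz Fz]] : exists2 s, 0 < s < 1 &
      exists2 z, f (x0 + s *: (x - x0)) z & c < F z.
    apply: contrapT => h.
    have : Iset f x0 x `<=` [set z | F z <= c].
      apply: cl_min => //; apply: ch_min; first exact: half_cvx.
      move=> z [s s01 fz]; rewrite /= leNgt; apply/negP => Fz'; apply: h.
      by exists s => //; exists z.
    move=> /(_ w Iw) /=; lra.
  have t0 : 0 < 1 - s by move: s01 => /andP[_ ?]; lra.
  have e : x + (1 - s) *: (x0 - x) = x0 + s *: (x - x0).
    by rewrite nf_seg nf_seg2; congr (_ + _); congr (_ *: _); ring.
  have h1 : (phi f F (x + (1 - s) *: (x0 - x)) <= (- F z)%:E)%E.
    by rewrite e; apply: ereal_inf_lbound; exists z.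
  have h3 : (ominus (phi f F (x + (1 - s) *: (x0 - x))) (phi f F x) <= (c - F z)%:E)%E.
    apply: ereal_inf_lbound; exists (c - F z) => //=.
    apply: le_trans h1 _.
    have -> : (- F z)%:E = ((- c)%:E + (c - F z)%:E)%E by rewrite -EFinD; congr (_%:E); ring.
    exact: leeD2r.
  have h4 : (dphi f F x (x0 - x) <= ((1 - s)^-1)%:E * (c - F z)%:E)%E.
    apply: (@le_trans _ _ (((1 - s)^-1)%:E * ominus (phi f F (x + (1 - s) *: (x0 - x))) (phi f F x))%E).
      by apply: ereal_inf_lbound; exists (1 - s).
    by apply: lee_wpmul2l => //; rewrite lee_fin invr_ge0 ltW.
  apply: (le_lt_trans h4); rewrite -EFinM lte_fin pmulr_rlt0; first lra.
  by rewrite invr_gt0.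
move=> hL x domx neq.
have [zs [[[zlin zcont] zC] [znz [phinf dneg]]]] := hL x neq.
have zlin' : forall a u v, zs (a *: u + v) = a * zs u + zs v.
  by move=> a u v; exact: zlin.
have [z0 zZ zD] := lin_props zlin'.
have [b fb] := hx0; have [a0 fa0] := domx.
pose U := \bigcup_(t in [set t : R | 0 < t < 1]) f (x0 + t *: (x - x0)).
have UI : U `<=` Iset f x0 x by move=> z Uz; apply: subset_closure; exact: ch_sub.
split.
- move=> a fa B nB.
  have hg : continuous (fun t : R^o => 1 *: (t *: (a - b) + b)).
    move=> t; apply: (@continuous_comp _ _ _ (fun t : R^o => t *: (a - b)) (fun y : Z => 1 *: (y + b))); first exact: (@cont_lscale R Z (a - b) t).
    exact: (@cont_aff R Z 1 b).
  have : nbhs (1 *: ((1 : R^o) *: (a - b) + b)) B by rewrite !scale1r subrK.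
  move=> /(hg 1) /nbhs_ballP [e e0 he]; move: e0 => /= e0.
  have [t t01 te] : exists2 t : R, 0 < t < 1 & `|1 - t| < e.
    have [e1|e1] := leP e 1.
    + exists (1 - e / 2); first by apply/andP; split; lra.
      rewrite ger0_norm; lra.
    + exists (1 / 2); first by apply/andP; split; lra.
      rewrite ger0_norm; lra.
  have Bt := he t te.
  exists (t *: a + (1 - t) *: b); split.
    apply: ch_sub; exists t => //.
    by rewrite nf_seg; exact: convpt.
  move: Bt => /=; rewrite scale1r.
  have -> : t *: (a - b) + b = t *: a + (1 - t) *: b.
    by rewrite scalerBr scalerBl scale1r -addrA [- _ + b]addrC.
  by [].
- move=> eqI.
  move: dneg; rewrite /dphi => /ereal_inf_lt [_ [t t0 <-] ylt].
  move: t0 => /= t0.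
  have omlt : (ominus (phi f zs (x + t *: (x0 - x))) (phi f zs x) < 0)%E.
    rewrite ltNge; apply/negP => h; move: ylt; rewrite ltNge => /negP; apply.
    by apply: mule_ge0 => //; rewrite lee_fin invr_ge0 ltW.
  have [_ [u hu <-] ult] := ereal_inf_lt omlt.
  move: hu => /= hu.
  have phiub : (phi f zs x <= (- zs a0)%:E)%E by apply: ereal_inf_lbound; exists a0.
  case phiE : (phi f zs x) phiub hu phinf => [ph| |] phiub hu phinf //.
  have r1lt : (phi f zs (x + t *: (x0 - x)) < ph%:E)%E.
    apply: le_lt_trans hu _; rewrite -EFinD lte_fin; move: ult; rewrite lte_fin; lra.
  have [_ [z fz <-] zlt] := ereal_inf_lt r1lt.
  move: zlt; rewrite lte_fin => zlt.
  pose th := (1 + t)^-1.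
  have th0 : 0 < th by rewrite /th invr_gt0; lra.
  have th1 : th < 1 by rewrite /th invf_lt1; lra.
  have key a : f x a -> ph <= - (th * zs z) - (1 - th) * zs a.
    move=> fa.
    have fq : f x (th *: z + (1 - th) *: a).
      rewrite -eqI; apply: UI; exists th; first by apply/andP.
      have -> : x0 + th *: (x - x0) = th *: (x + t *: (x0 - x)) + (1 - th) *: x.
        rewrite nf_seg2 nf_conv nf_seg.
        have t1 : 1 + t != 0 by rewrite lt0r_neq0 //; lra.
        have e1 : th * (1 - t) + (1 - th) = th by rewrite /th; field.
        have e2 : th * t = 1 - th by rewrite /th; field.
        by rewrite e1 e2.
      by apply: convpt => //; apply/andP.
    have : (phi f zs x <= (- zs (th *: z + (1 - th) *: a))%:E)%E.
      by apply: ereal_inf_lbound; exists (th *: z + (1 - th) *: a).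
    rewrite phiE lee_fin zD !zZ; lra.
  have lb : (((ph + th * zs z) / (1 - th))%:E <= phi f zs x)%E.
    apply/ereal_infP => _ [a fa <-]; rewrite lee_fin ler_pdivrMr; last lra.
    have := key a fa; lra.
  rewrite phiE lee_fin ler_pdivrMr in lb; last lra.
  have : th * (ph + zs z) <= 0 by lra.
  rewrite pmulr_rle0 //; lra.
Qed.
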